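(* Let $(\mathscr C,A,\psi)$ be an entwining structure. Then the functor $F_\psi:Com^{\mathscr C}\to Com^{\mathscr C}_A(\psi)$, $F_\psi(\mathcal M)=\mathcal M\otimes A$, is separable if and only if there exists $\sigma\in V_1$ such that $\sigma_X(f\otimes1)=\epsilon_X(f)$ for all $f\in\mathscr C(X,X)$ and all $X\in Ob(\mathscr C)$.
   Context: $K$ is a field. A $K$-coalgebra with several objects $\mathscr C$: a set $Ob(\mathscr C)$, vector spaces $\mathscr C(X,Y)$, linear comultiplications $\delta_{XYZ}:\mathscr C(X,Z)\to\mathscr C(Y,Z)\otimes\mathscr C(X,Y)$, $\delta_{XYZ}(f)=f_{Y1}\otimes f_{Y2}$, and counits $\epsilon_X:\mathscr C(X,X)\to K$, with $(\delta_{YWZ}\otimes\mathrm{id})\delta_{XYZ}=(\mathrm{id}\otimes\delta_{XYW})\delta_{XWZ}$ and $(\epsilon_Y\otimes\mathrm{id})\delta_{XYY}=\mathrm{id}=(\mathrm{id}\otimes\epsilon_X)\delta_{XXY}$. For a $K$-algebra $A$ (multiplication $\mu_A$), an entwining structure $(\mathscr C,A,\psi)$ is a family of linear maps $\psi_{XY}:\mathscr C(X,Y)\otimes A\to A\otimes\mathscr C(X,Y)$, $\psi_{XY}(f\otimes a)=a_\psi\otimes f^\psi$, with (i) $(\mathrm{id}_A\otimes\delta_{XYZ})\psi_{XZ}=(\psi_{YZ}\otimes\mathrm{id})(\mathrm{id}\otimes\psi_{XY})(\delta_{XYZ}\otimes\mathrm{id}_A)$; (ii) $\psi_{XZ}(\mathrm{id}\otimes\mu_A)=(\mu_A\otimes\mathrm{id})(\mathrm{id}_A\otimes\psi_{XZ})(\psi_{XZ}\otimes\mathrm{id}_A)$;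 (iii) $\psi_{XZ}(f\otimes1)=1\otimes f$; (iv) $\epsilon_Z(g^\psi)a_\psi=\epsilon_Z(g)a$. $Com^{\mathscr C}$: right $\mathscr C$-comodules (spaces $\mathcal M(X)$, coactions $\rho_{XY}(m)=m_{Y0}\otimes m_{Y1}\in\mathcal M(Y)\otimes\mathscr C(X,Y)$ with $(\rho_{ZY}\otimes\mathrm{id})\rho_{XZ}=(\mathrm{id}\otimes\delta_{XZY})\rho_{XY}$, $(\mathrm{id}\otimes\epsilon_X)\rho_{XX}=\mathrm{id}$) with coaction-compatible linear families as morphisms. $Com^{\mathscr C}_A(\psi)$: entwined comodules (comodules with right $A$-module structures on each $\mathcal M(X)$ such that $\rho_{XY}(ma)=m_{Y0}a_\psi\otimes(m_{Y1})^\psi$) with $A$-linear comodule morphisms. $F_\psi(\mathcal M)(X)=\mathcal M(X)\otimes A$ with $(m\otimes a)b=m\otimes ab$ and coaction $m\otimes a\mapsto m_{Y0}\otimes a_\psi\otimes(m_{Y1})^\psi$; $F_\psi(\phi)=\phi\otimes\mathrm{id}_A$. $V_1$ is the space of families $\sigma=\{\sigma_X:\mathscr C(X,X)\otimes A\to K\}_{X}$ of linear maps with $\sigma_Y(f_{Y1}\otimes a_\psi)f_{Y2}^\psi=\sigma_X(f_{X2}\otimes a)f_{X1}$ for all $f\in\mathscr C(X,Y)$, $a\in A$, where $a_\psi\otimes f_{Y2}^\psi=\psi_{XY}(f_{Y2}\otimes a)$. A functor $F:\mathcal D\to\mathcal D'$ is separable if the natural transformation $\mathcal D(-,-)\to\mathcal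 D'(F-,F-)$, $\phi\mapsto F(\phi)$, has a natural left inverse. *)

(* Defs.v *)
From HB Require Import structures.
From mathcomp Require Import all_boot all_order all_algebra.
From mathcomp Require Import generic_quotient boolp.

Set Implicit Arguments.
Unset Strict Implicit.
Unset Printing Implicit Defensive.

Import GRing.Theory.
Local Open Scope ring_scope.
Local Open Scope quotient_scope.

(* Algebraic tensor product U (x) V of two K-vector spaces, built as the      *)
(* quotient of finite formal sums  sum_i u_i (x) v_i  (lists of pairs) by the *)
(* relation "equal under every K-bilinear map into every K-vector space".     *)
Section Tensor.
Variable K : fieldType.
Variables U V : lmodType K.

Definition bilin (W : lmodType K) (b : U -> V -> W) : Prop :=
  (forall u, linear (b u)) /\ (forall v, linear (b^~ v)).

Definition tsum (W : lmodType K) (b : U -> V -> W) (s : seq (U * V)) : W :=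
  \sum_(p <- s) b p.1 p.2.

Definition teq (s t : seq (U * V)) : Prop :=
  forall (W : lmodType K) (b : U -> V -> W), bilin b -> tsum b s = tsum b t.

Definition teqb (s t : seq (U * V)) : bool := `[< teq s t >].

Lemma teqb_refl : reflexive teqb.
Proof. by move=> s; apply/asboolP. Qed.

Lemma teqb_sym : symmetric teqb.
Proof.
by move=> s t; apply/asboolP/asboolP => h W b hb; rewrite h.
Qed.

Lemma teqb_trans : transitive teqb.
Proof.
move=> t s u /asboolP h1 /asboolP h2; apply/asboolP => W b hb.
by rewrite h1 // h2.
Qed.

Canonical teqb_equiv := EquivRel teqb teqb_refl teqb_sym teqb_trans.

Definition tens := {eq_quot teqb}.
HB.instance Definition _ := Choice.on tens.
HB.instance Definition _ := EqQuotient.on tens.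

Definition tpi (s : seq (U * V)) : tens := \pi_tens s.

Lemma tpiP s t : teq s t -> tpi s = tpi t.
Proof. by move=> h; apply/eqmodP/asboolP. Qed.

Lemma tpi_repr (x : tens) : teq (repr x) (repr x).
Proof. by []. Qed.

Lemma teq_repr s : teq (repr (tpi s)) s.
Proof.
have := reprK (tpi s); rewrite /tpi => /eqmodP /asboolP; exact.
Qed.

Lemma linZ_aux (W W' : lmodType K) (f : W -> W') :
  linear f -> forall a u, f (a *: u) = a *: f u.
Proof.
move=> hf a u.
have f0 : f 0 = 0.
  have := hf 1 0 0; rewrite !scale1r addr0.
  by move/(congr1 (fun z => z - f 0)); rewrite addrK subrr => /esym.
by have := hf a u 0; rewrite addr0 f0 addr0.
Qed.

Definition tscl (a : K) (s : seq (U * V)) := [seq (a *: p.1, p.2) | p <- s].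

Lemma tsum_cat (W : lmodType K) (b : U -> V -> W) s t :
  tsum b (s ++ t) = tsum b s + tsum b t.
Proof. by rewrite /tsum big_cat. Qed.

Lemma tsum_scl (W : lmodType K) (b : U -> V -> W) a s :
  bilin b -> tsum b (tscl a s) = a *: tsum b s.
Proof.
move=> [_ hr]; rewrite /tsum big_map scaler_sumr; apply: eq_bigr => p _ /=.
by rewrite (linZ_aux (hr p.2)).
Qed.

Lemma teq_cat s s' t t' : teq s s' -> teq t t' -> teq (s ++ t) (s' ++ t').
Proof. by move=> h1 h2 W b hb; rewrite !tsum_cat h1 // h2. Qed.

Lemma teq_scl a s s' : teq s s' -> teq (tscl a s) (tscl a s').
Proof. by move=> h W b hb; rewrite !tsum_scl // h. Qed.

Definition tzero : tens := tpi [::].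
Definition tadd (x y : tens) : tens := tpi (repr x ++ repr y).
Definition tscale (a : K) (x : tens) : tens := tpi (tscl a (repr x)).
Definition topp (x : tens) : tens := tscale (-1) x.

Lemma tensE (x : tens) : x = tpi (repr x).
Proof. by rewrite /tpi reprK. Qed.

Lemma tpi_eq (x y : tens) : teq (repr x) (repr y) -> x = y.
Proof. by move=> h; rewrite (tensE x) (tensE y); apply: tpiP. Qed.

Lemma tsum_repr (W : lmodType K) (b : U -> V -> W) s :
  bilin b -> tsum b (repr (tpi s)) = tsum b s.
Proof. by move=> hb; rewrite teq_repr. Qed.

Ltac tsimp := repeat (rewrite ?tsum_repr // ?tsum_cat // ?tsum_scl //).

Lemma taddA : associative tadd.
Proof.
move=> x y z; apply: tpi_eq => W b hb; rewrite /tadd /topp /tscale /tzero.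
by tsimp; rewrite addrA.
Qed.

Lemma taddC : commutative tadd.
Proof.
move=> x y; apply: tpi_eq => W b hb; rewrite /tadd /topp /tscale /tzero.
by tsimp; rewrite addrC.
Qed.

Lemma tadd0 : left_id tzero tadd.
Proof.
move=> x; apply: tpi_eq => W b hb; rewrite /tadd /topp /tscale /tzero.
by tsimp; rewrite /tsum big_nil add0r.
Qed.

Lemma taddN : left_inverse tzero topp tadd.
Proof.
move=> x; apply: tpi_eq => W b hb; rewrite /tadd /topp /tscale /tzero.
by tsimp; rewrite /tsum big_nil scaleN1r addNr.
Qed.

HB.instance Definition _ := GRing.isZmodule.Build tens taddA taddC tadd0 taddN.

Lemma tscaleA a b (x : tens) : tscale a (tscale b x) = tscale (a * b) x.
Proof.
apply: tpi_eq => W c hc; rewrite /tadd /topp /tscale /tzero.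
by tsimp; rewrite scalerA.
Qed.

Lemma tscale1 : left_id 1 tscale.
Proof.
move=> x; apply: tpi_eq => W c hc; rewrite /tadd /topp /tscale /tzero.
by tsimp; rewrite scale1r.
Qed.

Lemma tscaleDr : right_distributive tscale tadd.
Proof.
move=> a x y; apply: tpi_eq => W c hc; rewrite /tadd /topp /tscale /tzero.
by tsimp; rewrite scalerDr.
Qed.

Lemma tscaleDl (x : tens) : {morph tscale^~ x : a b / a + b >-> tadd a b}.
Proof.
move=> a b; apply: tpi_eq => W c hc; rewrite /tadd /topp /tscale /tzero.
by tsimp; rewrite scalerDl.
Qed.

HB.instance Definition _ :=
  GRing.Zmodule_isLmodule.Build K tens tscaleA tscale1 tscaleDr tscaleDl.

Definition tpure (u : U) (v : V) : tens := tpi [:: (u, v)].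

Definition tlift (W : lmodType K) (b : U -> V -> W) (x : tens) : W :=
  tsum b (repr x).

End Tensor.

Arguments tpure {K U V}.
Notation "u '(x)' v" := (tpure u v) (at level 40, left associativity).

Section TensorMaps.
Variable K : fieldType.

Definition tmap (U V U' V' : lmodType K) (f : U -> U') (g : V -> V')
  (x : tens U V) : tens U' V' :=
  tlift (fun u v => f u (x) g v) x.

Definition tassoc (U V W : lmodType K) (x : tens (tens U V) W) : tens U (tens V W) :=
  tlift (fun (y : tens U V) (w : W) => tlift (fun u v => u (x) (v (x) w)) y) x.

Definition tassocV (U V W : lmodType K) (x : tens U (tens V W)) : tens (tens U V) W :=
  tlift (fun (u : U) (y : tens V W) => tlift (fun v w => (u (x) v) (x) w) y) x.

End TensorMaps.

Unset Implicit Arguments.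
Section Entwining.
Variable K : fieldType.
Variable Ob : Type.
Variable C : Ob -> Ob -> lmodType K.
Variable delta : forall X Y Z : Ob, C X Z -> tens (C Y Z) (C X Y).
Variable eps : forall X : Ob, C X X -> K.
Variable A : algType K.
Variable psi : forall X Y : Ob, tens (C X Y) A -> tens A (C X Y).

Definition coalg_so : Prop :=
  [/\ (forall X Y Z, linear (delta X Y Z)),
      (forall X, scalar (eps X)),
      (* (delta_YWZ (x) id) delta_XYZ = (id (x) delta_XYW) delta_XWZ *)
      (forall X Y W Z (f : C X Z),
         tassoc (tmap (delta Y W Z) id (delta X Y Z f))
         = tmap id (delta X Y W) (delta X W Z f)),
      (forall X Y (f : C X Y),
         tlift (fun (g : C Y Y) (h : C X Y) => eps Y g *: h) (delta X Y Y f) = f) &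
      (forall X Y (f : C X Y),
         tlift (fun (h : C X Y) (g : C X X) => eps X g *: h) (delta X X Y f) = f)].

Definition mulA : tens A A -> A := tlift (fun a b : A => a * b).

Definition entwining : Prop :=
  [/\ (forall X Y, linear (psi X Y)),
      (* (i) (id_A (x) delta_XYZ) psi_XZ
             = (psi_YZ (x) id)(id (x) psi_XY)(delta_XYZ (x) id_A) *)
      (forall X Y Z (t : tens (C X Z) A),
         tmap id (delta X Y Z) (psi X Z t)
         = tassoc (tmap (psi Y Z) id
             (tassocV (tmap id (psi X Y) (tassoc (tmap (delta X Y Z) id t)))))),
      (* (ii) psi_XZ (id (x) mu_A) = (mu_A (x) id)(id_A (x) psi_XZ)(psi_XZ (x) id_A) *)
      (forall X Z (t : tens (C X Z) (tens A A)),
         psi X Z (tmap id mulA t)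
         = tmap mulA id
             (tassocV (tmap id (psi X Z) (tassoc (tmap (psi X Z) id (tassocV t)))))),
      (forall X Z (f : C X Z), psi X Z (f (x) 1) = 1 (x) f) &
      (* (iv) eps_Z(g^psi) a_psi = eps_Z(g) a *)
      (forall Z (g : C Z Z) (a : A),
         tlift (fun (a' : A) (g' : C Z Z) => eps Z g' *: a') (psi Z Z (g (x) a))
         = eps Z g *: a)].

Definition is_comod (M : Ob -> lmodType K)
    (rho : forall X Y, M X -> tens (M Y) (C X Y)) : Prop :=
  [/\ (forall X Y, linear (rho X Y)),
      (* (rho_ZY (x) id) rho_XZ = (id (x) delta_XZY) rho_XY *)
      (forall X Z Y (m : M X),
         tassoc (tmap (rho Z Y) id (rho X Z m)) = tmap id (delta X Z Y) (rho X Y m)) &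
      (forall X (m : M X),
         tlift (fun (n : M X) (g : C X X) => eps X g *: n) (rho X X m) = m)].

Record comod := Comod {
  cM : Ob -> lmodType K;
  crho : forall X Y, cM X -> tens (cM Y) (C X Y);
  crho_ax : is_comod cM crho }.

Definition is_comod_hom (M N : comod) (phi : forall X, cM M X -> cM N X) : Prop :=
  (forall X, linear (phi X)) /\
  (forall X Y (m : cM M X), crho N X Y (phi X m) = tmap (phi Y) id (crho M X Y m)).

Definition is_entw_comod (E : Ob -> lmodType K)
    (rho : forall X Y, E X -> tens (E Y) (C X Y)) (act : forall X, E X -> A -> E X) :
    Prop :=
  [/\ is_comod E rho,
      (forall X, bilin (act X)),
      (forall X (m : E X) (a b : A), act X (act X m a) b = act X m (a * b)),
      (forall X (m : E X), act X m 1 = m) &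
      (* rho_XY (m a) = m_Y0 a_psi (x) (m_Y1)^psi *)
      (forall X Y (m : E X) (a : A),
         rho X Y (act X m a)
         = tmap (fun p => tlift (act Y) p) id
             (tassocV (tmap id (psi X Y) (tassoc (rho X Y m (x) a)))))].

Definition is_entw_hom (E E' : Ob -> lmodType K)
    (rho : forall X Y, E X -> tens (E Y) (C X Y))
    (rho' : forall X Y, E' X -> tens (E' Y) (C X Y))
    (act : forall X, E X -> A -> E X) (act' : forall X, E' X -> A -> E' X)
    (g : forall X, E X -> E' X) : Prop :=
  [/\ (forall X, linear (g X)),
      (forall X (m : E X) (a : A), g X (act X m a) = act' X (g X m) a) &
      (forall X Y (m : E X), rho' X Y (g X m) = tmap (g Y) id (rho X Y m))].

Arguments cM : clear implicits.
Arguments crho : clear implicits.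

Definition FM (M : comod) (X : Ob) : lmodType K := tens (cM M X) A.

Definition Frho (M : comod) (X Y : Ob) (x : FM M X) : tens (FM M Y) (C X Y) :=
  tassocV (tmap id (psi X Y) (tassoc (tmap (crho M X Y) id x))).

Definition Fact (M : comod) (X : Ob) (x : FM M X) (b : A) : FM M X :=
  tmap id (fun a : A => a * b) x.

Definition Fmap (M N : comod) (phi : forall X, cM M X -> cM N X) (X : Ob) :
    FM M X -> FM N X :=
  tmap (phi X) id.

Definition is_Fhom (M N : comod) (g : forall X, FM M X -> FM N X) : Prop :=
  is_entw_hom (FM M) (FM N) (Frho M) (Frho N) (Fact M) (Fact N) g.

(* F_psi is separable: the natural transformation
   Hom_{Com^C}(-,-) -> Hom_{Com^C_A(psi)}(F_psi -, F_psi -), phi |-> F_psi(phi),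
   has a natural left inverse P. *)
Definition Fpsi_separable : Prop :=
  exists P : forall (M N : comod) (g : forall X, FM M X -> FM N X),
               is_Fhom M N g -> forall X, cM M X -> cM N X,
    [/\
        (forall M N g (hg : is_Fhom M N g), is_comod_hom M N (P M N g hg)),
        (forall M N (phi : forall X, cM M X -> cM N X) (hphi : is_comod_hom M N phi)
                (hF : is_Fhom M N (Fmap M N phi)),
           forall X (m : cM M X), P M N (Fmap M N phi) hF X m = phi X m) &
        (* naturality in both variables:
           P (F beta o g o F alpha) = beta o P g o alpha *)
        (forall M' M N N' (alpha : forall X, cM M' X -> cM M X)
                (beta : forall X, cM N X -> cM N' X)
                (g : forall X, FM M X -> FM N X) (hg : is_Fhom M N g),
           is_comod_hom M' M alpha -> is_comod_hom N N' beta ->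
           forall hc : is_Fhom M' N' (fun X x => Fmap N N' beta X (g X (Fmap M' M alpha X x))),
           forall X (m : cM M' X),
             P M' N' _ hc X m = beta X (P M N g hg X (alpha X m)))].

Definition inV1 (sigma : forall X, tens (C X X) A -> K) : Prop :=
  (forall X, scalar (sigma X)) /\
  (* sigma_Y(f_Y1 (x) a_psi) f_Y2^psi = sigma_X(f_X2 (x) a) f_X1 *)
  (forall X Y (f : C X Y) (a : A),
     tlift (fun (s : tens (C Y Y) A) (h : C X Y) => sigma Y s *: h)
       (tassocV (tmap id (psi X Y) (tassoc (delta X Y Y f (x) a))))
     = tlift (fun (f1 : C X Y) (f2 : C X X) => sigma X (f2 (x) a) *: f1)
         (delta X X Y f)).

End Entwining.

(* Main.v *)
Require Import Defs.
From HB Require Import structures.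
From mathcomp Require Import all_boot all_order all_algebra.
From mathcomp Require Import generic_quotient boolp.
Local Open Scope ring_scope.
Set Implicit Arguments.
Unset Strict Implicit.
Unset Printing Implicit Defensive.
Import GRing.Theory.

Section LinLemmas.
Variable K : fieldType.
Implicit Types U V W : lmodType K.

Lemma lin_add U W (f : U -> W) : linear f -> forall x y, f (x + y) = f x + f y.
Proof. by move=> hf x y; have := hf 1 x y; rewrite !scale1r. Qed.

Lemma lin_Z U W (f : U -> W) : linear f -> forall a x, f (a *: x) = a *: f x.
Proof. exact: linZ_aux. Qed.

Lemma lin_0 U W (f : U -> W) : linear f -> f 0 = 0.
Proof. by move=> hf; rewrite -(scale0r 0) lin_Z // scale0r. Qed.

Lemma lin_sum U W (f : U -> W) I (r : seq I) (F : I -> U) :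
  linear f -> f (\sum_(i <- r) F i) = \sum_(i <- r) f (F i).
Proof.
move=> hf; elim: r => [|i r IH]; first by rewrite !big_nil lin_0.
by rewrite !big_cons lin_add // IH.
Qed.

Lemma linP U W (f : U -> W) :
  (forall x y, f (x + y) = f x + f y) -> (forall a x, f (a *: x) = a *: f x) -> linear f.
Proof. by move=> hD hZ a x y; rewrite hD hZ. Qed.

Lemma lin_comp U V W (f : V -> W) (g : U -> V) :
  linear f -> linear g -> linear (fun x => f (g x)).
Proof. by move=> hf hg a x y; rewrite hg hf. Qed.

Lemma lin_id U : linear (fun x : U => x).
Proof. by []. Qed.

Lemma lin_scale U W (f : U -> K) (w : W) : scalar f -> linear (fun x => f x *: w).
Proof. by move=> hf a x y; rewrite hf scalerDl scalerA. Qed.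

Lemma lin_scale_r U W (w : K) (f : U -> W) : linear f -> linear (fun x => w *: f x).
Proof. by move=> hf a x y; rewrite hf scalerDr !scalerA mulrC. Qed.

Lemma lin_sumf U W I (r : seq I) (F : I -> U -> W) :
  (forall i, linear (F i)) -> linear (fun x => \sum_(i <- r) F i x).
Proof.
move=> hF a x y; rewrite scaler_sumr -big_split /=; apply: eq_bigr => i _.
by rewrite hF.
Qed.

Lemma scal_comp U V (f : V -> K) (g : U -> V) :
  scalar f -> linear g -> scalar (fun x => f (g x)).
Proof. by move=> hf hg a x y; rewrite hg hf. Qed.

End LinLemmas.

Section TensLemmas.
Variable K : fieldType.
Section TUV.
Variables U V : lmodType K.

Lemma taddE (x y : tens U V) : x + y = tpi (repr x ++ repr y).
Proof. by []. Qed.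
Lemma tscaleE a (x : tens U V) : a *: x = tpi (tscl a (repr x)).
Proof. by []. Qed.
Lemma tzeroE : (0 : tens U V) = tpi [::].
Proof. by []. Qed.

Lemma tpi_cons p s : tpi (p :: s) = tpure p.1 p.2 + tpi s :> tens U V.
Proof.
rewrite taddE; apply: tpiP => W b hb.
by rewrite tsum_cat !tsum_repr // /tsum big_cons big_cons big_nil addr0.
Qed.

Lemma tpi_sum s : tpi s = \sum_(p <- s) tpure p.1 p.2 :> tens U V.
Proof. elim: s => [|p s IH]; first by rewrite big_nil. by rewrite tpi_cons IH big_cons. Qed.

Lemma tens_sum (x : tens U V) : x = \sum_(p <- repr x) tpure p.1 p.2.
Proof. by rewrite -tpi_sum -tensE. Qed.

Lemma tens_ext (W : lmodType K) (f g : tens U V -> W) :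
  linear f -> linear g -> (forall u v, f (u (x) v) = g (u (x) v)) -> forall x, f x = g x.
Proof.
move=> hf hg h x; rewrite (tens_sum x) !lin_sum //; apply: eq_bigr => p _; exact: h.
Qed.

Lemma tlift_pure (W : lmodType K) (b : U -> V -> W) u v :
  bilin b -> tlift b (u (x) v) = b u v.
Proof. by move=> hb; rewrite /tlift /tpure tsum_repr // /tsum big_cons big_nil addr0. Qed.

Lemma tlift_lin (W : lmodType K) (b : U -> V -> W) : bilin b -> linear (tlift b).
Proof.
move=> hb a x y; rewrite /tlift taddE tscaleE tsum_repr // tsum_cat tsum_repr //.
by rewrite tsum_scl.
Qed.

Lemma tpure_linl (v : V) : linear (fun u : U => u (x) v).
Proof.
move=> a u u'; rewrite taddE tscaleE; apply: tpiP => W b hb.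
rewrite tsum_cat !tsum_repr // tsum_scl // tsum_repr // /tsum !big_cons !big_nil !addr0 /=.
by case: hb => _ hr; rewrite hr.
Qed.

Lemma tpure_linr (u : U) : linear (fun v : V => u (x) v).
Proof.
move=> a v v'; rewrite taddE tscaleE; apply: tpiP => W b hb.
rewrite tsum_cat !tsum_repr // tsum_scl // tsum_repr // /tsum !big_cons !big_nil !addr0 /=.
by case: hb => hl _; rewrite hl.
Qed.

Lemma tpure_bilin : bilin (@tpure K U V).
Proof. split; [exact: tpure_linr | exact: tpure_linl]. Qed.

Lemma tlift_ext (W : lmodType K) (b b' : U -> V -> W) x :
  (forall u v, b u v = b' u v) -> tlift b x = tlift b' x.
Proof. by move=> h; have -> : b = b' by apply: funext => u; apply: funext => v. Qed.

Lemma tlift_param (T W : lmodType K) (b : T -> U -> V -> W) x :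
  (forall u v, linear (fun t => b t u v)) -> linear (fun t => tlift (b t) x).
Proof.
move=> h; rewrite /tlift /tsum; apply: lin_sumf => p; exact: h.
Qed.

Lemma tlift_paramS (W : lmodType K) (b : K -> U -> V -> W) x c :
  (forall u v, b c u v = c *: b 1 u v) -> tlift (b c) x = c *: tlift (b 1) x.
Proof.
move=> h; rewrite /tlift /tsum scaler_sumr; apply: eq_bigr => p _; exact: h.
Qed.

Lemma lin_tlift (W W' : lmodType K) (h : W -> W') (b : U -> V -> W) x :
  linear h -> bilin b -> h (tlift b x) = tlift (fun u v => h (b u v)) x.
Proof. by move=> hh hb; rewrite /tlift /tsum lin_sum. Qed.

End TUV.

Implicit Types U V W : lmodType K.

Lemma tmap_bilin (U V U' V' : lmodType K) (f : U -> U') (g : V -> V') :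
  linear f -> linear g -> bilin (fun u v => f u (x) g v).
Proof.
move=> hf hg; split=> [u|v].
  exact: (lin_comp (tpure_linr _) hg).
exact: (lin_comp (tpure_linl _) hf).
Qed.

Lemma tmap_pure (U V U' V' : lmodType K) (f : U -> U') (g : V -> V') u v :
  linear f -> linear g -> tmap f g (u (x) v) = f u (x) g v.
Proof. by move=> hf hg; rewrite /tmap tlift_pure //; exact: tmap_bilin. Qed.

Lemma tmap_lin (U V U' V' : lmodType K) (f : U -> U') (g : V -> V') :
  linear f -> linear g -> linear (tmap f g).
Proof. by move=> hf hg; apply: tlift_lin; exact: tmap_bilin. Qed.

Lemma tassoc_bilin1 U V W (w : W) : bilin (fun (u : U) (v : V) => u (x) (v (x) w)).
Proof.
split=> [u|v]; first exact: (lin_comp (tpure_linr _) (tpure_linl _)).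
exact: tpure_linl.
Qed.

Lemma tassoc_bilin U V W :
  bilin (fun (y : tens U V) (w : W) => tlift (fun u v => u (x) (v (x) w)) y).
Proof.
split=> [y|w].
  apply: tlift_param => u v; exact: (lin_comp (tpure_linr _) (tpure_linr _)).
apply: tlift_lin; exact: tassoc_bilin1.
Qed.

Lemma tassoc_pure U V W (u : U) (v : V) (w : W) : tassoc ((u (x) v) (x) w) = u (x) (v (x) w).
Proof. rewrite /tassoc tlift_pure ?tlift_pure //; [exact: tassoc_bilin1 | exact: tassoc_bilin]. Qed.

Lemma tassoc_lin U V W : linear (@tassoc K U V W).
Proof. apply: tlift_lin; exact: tassoc_bilin. Qed.

Lemma tassocV_bilin1 U V W (u : U) : bilin (fun (v : V) (w : W) => (u (x) v) (x) w).
Proof.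
split=> [v|w]; first exact: tpure_linr.
exact: (lin_comp (tpure_linl _) (tpure_linr _)).
Qed.

Lemma tassocV_bilin U V W :
  bilin (fun (u : U) (y : tens V W) => tlift (fun v w => (u (x) v) (x) w) y).
Proof.
split=> [u|y].
  apply: tlift_lin; exact: tassocV_bilin1.
apply: tlift_param => v w; exact: (lin_comp (tpure_linl _) (tpure_linl _)).
Qed.

Lemma tassocV_pure U V W (u : U) (v : V) (w : W) : tassocV (u (x) (v (x) w)) = (u (x) v) (x) w.
Proof. rewrite /tassocV tlift_pure ?tlift_pure //; [exact: tassocV_bilin1 | exact: tassocV_bilin]. Qed.

Lemma tassocV_lin U V W : linear (@tassocV K U V W).
Proof. apply: tlift_lin; exact: tassocV_bilin. Qed.

Lemma tens_ext3 U V W (Z : lmodType K) (f g : tens (tens U V) W -> Z) :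
  linear f -> linear g -> (forall u v w, f ((u (x) v) (x) w) = g ((u (x) v) (x) w)) ->
  forall x, f x = g x.
Proof.
move=> hf hg h; apply: tens_ext => // y w.
apply: (tens_ext (f := fun y => f (y (x) w)) (g := fun y => g (y (x) w))) => //.
  exact: (lin_comp hf (tpure_linl _)).
exact: (lin_comp hg (tpure_linl _)).
Qed.

Lemma tens_ext3' U V W (Z : lmodType K) (f g : tens U (tens V W) -> Z) :
  linear f -> linear g -> (forall u v w, f (u (x) (v (x) w)) = g (u (x) (v (x) w))) ->
  forall x, f x = g x.
Proof.
move=> hf hg h; apply: tens_ext => // u y.
apply: (tens_ext (f := fun y => f (u (x) y)) (g := fun y => g (u (x) y))) => //.
  exact: (lin_comp hf (tpure_linr _)).
exact: (lin_comp hg (tpure_linr _)).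
Qed.

Lemma tassocK U V W (x : tens (tens U V) W) : tassocV (tassoc x) = x.
Proof.
apply: (tens_ext3 (f := fun x => tassocV (tassoc x)) (g := id)) => //.
- exact: (lin_comp (@tassocV_lin _ _ _) (@tassoc_lin _ _ _)).
- by move=> u v w; rewrite tassoc_pure tassocV_pure.
Qed.

Lemma tassocVK U V W (x : tens U (tens V W)) : tassoc (tassocV x) = x.
Proof.
apply: (tens_ext3' (f := fun x => tassoc (tassocV x)) (g := id)) => //.
- exact: (lin_comp (@tassoc_lin _ _ _) (@tassocV_lin _ _ _)).
- by move=> u v w; rewrite tassocV_pure tassoc_pure.
Qed.

Lemma tmap_comp (U V U' V' U'' V'' : lmodType K) (f : U' -> U'') (g : V' -> V'') (f' : U -> U') (g' : V -> V') x :
  linear f -> linear g -> linear f' -> linear g' ->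
  tmap f g (tmap f' g' x) = tmap (fun u => f (f' u)) (fun v => g (g' v)) x.
Proof.
move=> hf hg hf' hg'.
apply: (tens_ext (f := fun x => tmap f g (tmap f' g' x))) => //.
- exact: (lin_comp (tmap_lin hf hg) (tmap_lin hf' hg')).
- exact: (tmap_lin (lin_comp hf hf') (lin_comp hg hg')).
- by move=> u v; rewrite !tmap_pure //; [exact: lin_comp | exact: lin_comp].
Qed.

Lemma tmap_id U V (x : tens U V) : tmap id id x = x.
Proof.
apply: (tens_ext (f := tmap id id) (g := id)) => //.
- exact: tmap_lin.
- by move=> u v; rewrite tmap_pure.
Qed.

Lemma tlift_tmap (U V U' V' W : lmodType K) (b : U' -> V' -> W) (f : U -> U') (g : V -> V') x :
  bilin b -> linear f -> linear g ->
  tlift b (tmap f g x) = tlift (fun u v => b (f u) (g v)) x.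
Proof.
move=> hb hf hg.
have hb' : bilin (fun u v => b (f u) (g v)).
  by case: hb => h1 h2; split=> [u|v]; [exact: (lin_comp (h1 _) hg)|exact: (lin_comp (h2 _) hf)].
apply: (tens_ext (f := fun x => tlift b (tmap f g x))) => //.
- exact: (lin_comp (tlift_lin hb) (tmap_lin hf hg)).
- exact: tlift_lin.
- by move=> u v; rewrite tmap_pure // !tlift_pure.
Qed.

End TensLemmas.

Unset Implicit Arguments.
Section Main.
Variables (K : fieldType) (Ob : Type) (C : Ob -> Ob -> lmodType K)
    (delta : forall X Y Z : Ob, C X Z -> tens (C Y Z) (C X Y))
    (eps : forall X : Ob, C X X -> K)
    (A : algType K)
    (psi : forall X Y : Ob, tens (C X Y) A -> tens A (C X Y)).

Hypothesis dlin : forall X Y Z, linear (delta X Y Z).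
Hypothesis elin : forall X, scalar (eps X).
Hypothesis dcoassoc : forall X Y W Z (f : C X Z),
  tassoc (tmap (delta Y W Z) id (delta X Y Z f)) = tmap id (delta X Y W) (delta X W Z f).
Hypothesis dcounitl : forall X Y (f : C X Y),
  tlift (fun (g : C Y Y) (h : C X Y) => eps Y g *: h) (delta X Y Y f) = f.
Hypothesis dcounitr : forall X Y (f : C X Y),
  tlift (fun (h : C X Y) (g : C X X) => eps X g *: h) (delta X X Y f) = f.
Hypothesis plin : forall X Y, linear (psi X Y).
Hypothesis pent1 : forall X Y Z (t : tens (C X Z) A),
  tmap id (delta X Y Z) (psi X Z t)
  = tassoc (tmap (psi Y Z) id
      (tassocV (tmap id (psi X Y) (tassoc (tmap (delta X Y Z) id t))))).
Hypothesis pent2 : forall X Z (t : tens (C X Z) (tens A A)),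
  psi X Z (tmap id (Defs.mulA K A) t)
  = tmap (Defs.mulA K A) id
      (tassocV (tmap id (psi X Z) (tassoc (tmap (psi X Z) id (tassocV t))))).
Hypothesis pent3 : forall X Z (f : C X Z), psi X Z (f (x) 1) = 1 (x) f.
Hypothesis pent4 : forall Z (g : C Z Z) (a : A),
  tlift (fun (a' : A) (g' : C Z Z) => eps Z g' *: a') (psi Z Z (g (x) a)) = eps Z g *: a.

Local Notation comodT := (comod K Ob C delta eps).
Local Notation cMM := (cM K Ob C delta eps).
Local Notation rho := (crho K Ob C delta eps).
Local Notation FMM := (FM K Ob C delta eps A).
Local Notation Frh := (Frho K Ob C delta eps A psi).
Local Notation Fac := (Fact K Ob C delta eps A).
Local Notation Fmp := (Fmap K Ob C delta eps A).

Lemma rho_lin (M : comodT) X Y : linear (rho M X Y).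
Proof. by case: (crho_ax K Ob C delta eps M). Qed.
Lemma rho_coassoc (M : comodT) X Z Y (m : cMM M X) :
  tassoc (tmap (rho M Z Y) id (rho M X Z m)) = tmap id (delta X Z Y) (rho M X Y m).
Proof. by case: (crho_ax K Ob C delta eps M). Qed.
Lemma rho_counit (M : comodT) X (m : cMM M X) :
  tlift (fun (n : cMM M X) (g : C X X) => eps X g *: n) (rho M X X m) = m.
Proof. by case: (crho_ax K Ob C delta eps M). Qed.

Ltac lin_extra := fail.
Ltac is_scalar := lazymatch goal with |- GRing.linear_for (@GRing.mul _) _ => idtac | _ => fail end.
Ltac lin :=
  first
    [ assumption | match goal with H : forall _, GRing.linear_for _ _ |- _ => exact: H end
    | match goal with H : forall _ _, GRing.linear_for _ _ |- _ => exact: H end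
    | exact: lin_id | exact: tassoc_lin | exact: tassocV_lin
    | exact: tpure_linl | exact: tpure_linr | exact: tpure_bilin
    | exact: dlin | exact: plin | exact: rho_lin | exact: elin | lin_extra
    | match goal with
      | |- GRing.linear_for _ (tmap _ _) => apply: tmap_lin; lin
      | |- GRing.linear_for _ (tlift _) => apply: tlift_lin; lin
      | |- bilin _ => split=> ? /=; lin
      | |- GRing.linear_for _ (GRing.scale ?c) => apply: (lin_scale_r c (f := fun x => x)); exact: lin_id
      | |- GRing.linear_for _ (fun t => tlift (@?B t) ?y0) => apply: tlift_param => ? ? /=; lin
      | |- GRing.linear_for _ (fun x => ?c *: @?G x) => apply: (lin_scale_r c (f := G)); lin
      | |- GRing.linear_for _ (fun x => @?F x *: ?w) => apply: (lin_scale (f := F) w); lin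
      | |- GRing.linear_for _ (fun x => ?F (@?G x) ?w) =>
          lazymatch G with (fun y => y) => fail | _ => idtac end;
          (tryif is_scalar then apply: (scal_comp (f := fun z => F z w) (g := G))
           else apply: (lin_comp (f := fun z => F z w) (g := G))); lin
      | |- GRing.linear_for _ (fun x => ?F (@?G x)) =>
          (tryif is_scalar then apply: (scal_comp (f := F) (g := G))
           else apply: (lin_comp (f := F) (g := G))); lin
      end ].

Ltac lins := lin.

Lemma Frho_lin (M : comodT) X Y : linear (Frh M X Y).
Proof. rewrite /Frho. lin. Qed.

Lemma Frho_pure (M : comodT) X Y (m : cMM M X) (a : A) :
  Frh M X Y (m (x) a) = tassocV (tmap id (psi X Y) (tassoc (rho M X Y m (x) a))).
Proof. by rewrite /Frho tmap_pure //; lin. Qed.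

Lemma tassoc_pl (U V W : lmodType K) (t : tens U V) (w : W) :
  tassoc (t (x) w) = tmap id (fun v => v (x) w) t.
Proof.
move: t; apply: tens_ext; try lin.
by move=> u v; rewrite tassoc_pure tmap_pure //; lin.
Qed.


Lemma tassocV_pr (U V W : lmodType K) (u : U) (t : tens V W) :
  tassocV (u (x) t) = tmap (fun v => u (x) v) id t.
Proof.
move: t; apply: tens_ext; try lin.
by move=> v w; rewrite tassocV_pure tmap_pure //; lin.
Qed.

Lemma Frho_one (M : comodT) X Y (m : cMM M X) :
  Frh M X Y (m (x) 1) = tmap (fun n => n (x) 1) id (rho M X Y m).
Proof.
rewrite Frho_pure; move: (rho M X Y m); apply: tens_ext; try lin.
by move=> u v; rewrite tassoc_pure tmap_pure ?pent3 ?tassocV_pure ?tmap_pure //; lin.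
Qed.

Lemma comod_hom_lin (M N : comodT) (b : forall X, cMM M X -> cMM N X) :
  is_comod_hom K Ob C delta eps M N b -> forall X, linear (b X).
Proof. by case. Qed.

Lemma comod_hom_colin (M N : comodT) (b : forall X, cMM M X -> cMM N X) :
  is_comod_hom K Ob C delta eps M N b ->
  forall X Y m, rho N X Y (b X m) = tmap (b Y) id (rho M X Y m).
Proof. by case. Qed.


Section Suff.
Variable sigma : forall X, tens (C X X) A -> K.
Hypothesis slin : forall X, scalar (sigma X).
Hypothesis sV1 : forall X Y (f : C X Y) (a : A),
     tlift (fun (s : tens (C Y Y) A) (h : C X Y) => sigma Y s *: h)
       (tassocV (tmap id (psi X Y) (tassoc (delta X Y Y f (x) a))))
     = tlift (fun (f1 : C X Y) (f2 : C X X) => sigma X (f2 (x) a) *: f1)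
         (delta X X Y f).
Hypothesis sone : forall X (f : C X X), sigma X (f (x) 1) = eps X f.

Ltac lin_extra ::= exact: slin.

Definition nub (M : comodT) X (n : cMM M X) (a : A) : cMM M X :=
  tlift (fun n0 (n1 : C X X) => sigma X (n1 (x) a) *: n0) (rho M X X n).
Definition nu (M : comodT) X : FMM M X -> cMM M X := tlift (nub M X).

Lemma nub_bilin (M : comodT) X : bilin (nub M X).
Proof. rewrite /nub; lins. Qed.

Lemma nu_lin (M : comodT) X : linear (nu M X).
Proof. apply: tlift_lin; exact: nub_bilin. Qed.
Ltac lin_extra ::= first [exact: slin | exact: nu_lin | exact: (proj1 (nub_bilin _ _)) | exact: (proj2 (nub_bilin _ _))].


Lemma nu_pure (M : comodT) X n a : nu M X (n (x) a) = nub M X n a.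
Proof. by rewrite /nu tlift_pure //; exact: nub_bilin. Qed.

Lemma nu_one (M : comodT) X n : nu M X (n (x) 1) = n.
Proof.
rewrite nu_pure /nub -[RHS](rho_counit M X n); apply: tlift_ext => u v.
by rewrite sone.
Qed.


Lemma nu_nat (M N : comodT) (b : forall X, cMM M X -> cMM N X) :
  is_comod_hom K Ob C delta eps M N b ->
  forall X x, nu N X (tmap (b X) id x) = b X (nu M X x).
Proof.
move=> hb; have bl := comod_hom_lin _ _ _ hb; move=> X; apply: tens_ext.
- apply: lin_comp; [exact: nu_lin | lins].
- apply: lin_comp; [lins | exact: nu_lin].
move=> n a; rewrite tmap_pure ?nu_pure /nub ?(comod_hom_colin _ _ _ hb) //; try lins.
rewrite tlift_tmap ?lin_tlift //; try lins.
by apply: tlift_ext => u v; rewrite lin_Z.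
Qed.


Local Notation Phi X Y a := (tlift (fun (f1 : C X Y) (f2 : C X X) => sigma X (f2 (x) a) *: f1)).
Local Notation Psi' X Y a := (fun d : tens (C Y Y) (C X Y) =>
  tlift (fun (s : tens (C Y Y) A) (h' : C X Y) => sigma Y s *: h')
    (tassocV (tmap id (psi X Y) (tassoc (d (x) a))))).

Lemma L2s (U : lmodType K) X Y (a : A) (s : tens U (C X Y)) (v : C X X) :
  tmap id (Phi X Y a) (tassoc (s (x) v)) = sigma X (v (x) a) *: s.
Proof.
move: s; apply: tens_ext; try lins.
move=> p q /=. rewrite tassoc_pure tmap_pure ?tlift_pure //; try lins.
by rewrite lin_Z //; lins.
Qed.

Lemma L2 (M : comodT) X Y (a : A) (t : tens (cMM M X) (C X X)) :
  tlift (fun n0 (n1 : C X X) => sigma X (n1 (x) a) *: rho M X Y n0) t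
  = tmap id (Phi X Y a) (tassoc (tmap (rho M X Y) id t)).
Proof.
move: t; apply: tens_ext; try lins.
by move=> u v; rewrite tlift_pure ?tmap_pure ?L2s //; lins.
Qed.

Lemma R3 X Y (m1 : C Y Y) (q : tens A (C X Y)) :
  tlift (fun (s : tens (C Y Y) A) (h' : C X Y) => sigma Y s *: h') (tassocV (m1 (x) q))
  = tlift (fun b h' => sigma Y (m1 (x) b) *: h') q.
Proof.
move: q; apply: tens_ext; try lins.
by move=> b h; rewrite tassocV_pure !tlift_pure //; lins.
Qed.

Lemma R1 (M : comodT) X Y (m : cMM M Y) (q : tens A (C X Y)) :
  tmap (nu M Y) id (tassocV (m (x) q)) = tlift (fun b h' => nub M Y m b (x) h') q.
Proof.
move: q; apply: tens_ext; try lins.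
by move=> b h /=; rewrite tassocV_pure tmap_pure ?tlift_pure ?nu_pure //; lins.
Qed.

Lemma Swap (U : lmodType K) X Y (s : tens U (C Y Y)) (q : tens A (C X Y)) :
  tlift (fun b (h' : C X Y) => tlift (fun m0 (m1 : C Y Y) => sigma Y (m1 (x) b) *: m0) s (x) h') q
  = tlift (fun m0 m1 => m0 (x) tlift (fun b (h' : C X Y) => sigma Y (m1 (x) b) *: h') q) s.
Proof.
move: q; apply: tens_ext; try lins.
move=> b h /=; rewrite tlift_pure; last by lins.
move: s; apply: tens_ext; try lins.
move=> m0 m1 /=; rewrite !tlift_pure; try lins.
by rewrite (lin_Z (tpure_linl _)) (lin_Z (tpure_linr _)).
Qed.

Lemma R2 (M : comodT) X Y (h : C X Y) (a : A) (s : tens (cMM M Y) (C Y Y)) :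
  tmap id (Psi' X Y a) (tassoc (s (x) h))
  = tlift (fun m0 m1 => m0 (x) tlift (fun b (h' : C X Y) => sigma Y (m1 (x) b) *: h')
                                    (psi X Y (h (x) a))) s.
Proof.
move: s; apply: tens_ext; try lins.
move=> m0 m1 /=; rewrite tassoc_pure tmap_pure ?tlift_pure //; try lins.
by rewrite tassoc_pure tmap_pure ?R3 //; lins.
Qed.

Lemma Rlem (M : comodT) X Y (a : A) (t : tens (cMM M Y) (C X Y)) :
  tmap (nu M Y) id (tassocV (tmap id (psi X Y) (tassoc (t (x) a))))
  = tmap id (Psi' X Y a) (tassoc (tmap (rho M Y Y) id t)).
Proof.
move: t; apply: tens_ext; try lins.
move=> m h /=; rewrite tassoc_pure tmap_pure ?R1 ?tmap_pure ?R2 //; try lins.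
by rewrite /nub Swap.
Qed.

Lemma nu_colin (M : comodT) X Y (x : FMM M X) :
  rho M X Y (nu M X x) = tmap (nu M Y) id (Frh M X Y x).
Proof.
move: x; apply: tens_ext; try lins.
  apply: lin_comp; [lins | exact: Frho_lin].
move=> n a /=; rewrite Frho_pure nu_pure /nub lin_tlift ?Rlem; try lins.
rewrite rho_coassoc tmap_comp; try lins.
rewrite (tlift_ext (b' := fun n0 (n1 : C X X) => sigma X (n1 (x) a) *: rho M X Y n0)); last first.
  by move=> u v; rewrite lin_Z //; lins.
rewrite L2 rho_coassoc tmap_comp; try lins.
congr tmap; apply: funext => h /=.
by rewrite sV1.
Qed.


Lemma suff_sep : Fpsi_separable K Ob C delta eps A psi.
Proof.
exists (fun M N g (_ : is_Fhom K Ob C delta eps A psi M N g) X m => nu N X (g X (m (x) 1))).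
split.
- move=> M N g [gl ga gc]; split.
    move=> X; apply: lin_comp; first exact: nu_lin.
    apply: lin_comp; first exact: gl.
    exact: tpure_linl.
  move=> X Y m /=.
  rewrite nu_colin gc Frho_one !tmap_comp //; try lins.
- move=> M N phi hphi hF X m /=.
  rewrite /Fmap tmap_pure ?nu_one //; try lins. by case: hphi.
- move=> M' M N N' al be g hg hal hbe hc X m /=.
  rewrite /Fmap tmap_pure; try lins; last by case: hal.
  by rewrite nu_nat.
Qed.

End Suff.

Lemma mulA_pure (a b : A) : Defs.mulA K A (a (x) b) = a * b.
Proof.
rewrite /Defs.mulA tlift_pure //; split=> [u|v] c x y /=.
  by rewrite mulrDr -scalerAr.
by rewrite mulrDl -scalerAl.
Qed.

Lemma mulA_lin : linear (Defs.mulA K A).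
Proof.
apply: tlift_lin; split=> [u|v] c x y /=.
  by rewrite mulrDr -scalerAr.
by rewrite mulrDl -scalerAl.
Qed.

Lemma mul_linl (b : A) : linear (fun a : A => a * b).
Proof. by move=> c x y; rewrite mulrDl -scalerAl. Qed.
Lemma mul_linr (a : A) : linear (fun b : A => a * b).
Proof. by move=> c x y; rewrite mulrDr -scalerAr. Qed.

Ltac lin_extra ::= first [exact: mul_linl | exact: mul_linr | exact: Frho_lin | exact: mulA_lin].

Lemma tmap_ext (U V U' V' : lmodType K) (f f' : U -> U') (g : V -> V') x :
  (forall u, f u = f' u) -> tmap f g x = tmap f' g x.
Proof. by move=> h; have -> : f = f' by apply: funext. Qed.
Arguments tmap_ext {U V U' V' f f' g x}.

Lemma tmap_assocV_nat (U V W W' : lmodType K) (f : W -> W') (u : U) (t : tens V W) :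
  linear f -> tmap id f (tassocV (u (x) t)) = tassocV (u (x) tmap id f t).
Proof.
move=> hf; move: t; apply: tens_ext; try lins.
by move=> v w /=; rewrite !tmap_pure ?tassocV_pure ?tmap_pure //; lins.
Qed.

Lemma assoc_pent (U V W Z : lmodType K) (u : U) (e : tens V W) (z : Z) :
  tassoc (tassocV (u (x) e) (x) z) = tassocV (u (x) tassoc (e (x) z)).
Proof.
move: e; apply: tens_ext; try lins.
by move=> v w /=; rewrite tassocV_pure !tassoc_pure tassocV_pure.
Qed.

Lemma tlift_epsV (U V : lmodType K) X (n : U) (w : tens V (C X X)) :
  tlift (fun (n' : tens U V) (g' : C X X) => eps X g' *: n') (tassocV (n (x) w))
  = n (x) tlift (fun (a' : V) (g' : C X X) => eps X g' *: a') w.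
Proof.
move: w; apply: tens_ext; try lins.
move=> b g /=; rewrite tassocV_pure !tlift_pure; try lins.
by rewrite (lin_Z (tpure_linr _)).
Qed.

Lemma Frho_counit (M : comodT) X (x : FMM M X) :
  tlift (fun (n : FMM M X) (g : C X X) => eps X g *: n) (Frh M X X x) = x.
Proof.
move: x; apply: tens_ext; try lins.
move=> m a /=; rewrite Frho_pure.
rewrite -{2}(rho_counit M X m).
move: (rho M X X m); apply: tens_ext; try lins.
move=> n g /=; rewrite tassoc_pure tmap_pure ?tlift_epsV ?pent4 ?tlift_pure //; try lins.
by rewrite (lin_Z (tpure_linr _)) (lin_Z (tpure_linl _)).
Qed.


Local Notation Eent X Z Y a := (fun d : tens (C Z Y) (C X Z) =>
  tassoc (tmap (psi Z Y) id (tassocV (tmap id (psi X Z) (tassoc (d (x) a)))))).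

Lemma Frho_coassoc (M : comodT) X Z Y (x : FMM M X) :
  tassoc (tmap (Frh M Z Y) id (Frh M X Z x)) = tmap id (delta X Z Y) (Frh M X Y x).
Proof.
move: x; apply: tens_ext; try lins.
move=> m a /=; rewrite !Frho_pure.
pose Om := fun (y : tens (cMM M Y) (tens (C Z Y) (C X Z))) =>
  tlift (fun m0 d => tassocV (m0 (x) Eent X Z Y a d)) y.
have Omb : bilin (fun (m0 : cMM M Y) (d : tens (C Z Y) (C X Z)) => tassocV (m0 (x) Eent X Z Y a d)).
  by lins.
have Oml : linear Om by apply: tlift_lin.
have HR : forall t : tens (cMM M Y) (C X Y),
    tmap id (delta X Z Y) (tassocV (tmap id (psi X Y) (tassoc (t (x) a))))
    = Om (tmap id (delta X Z Y) t).
  apply: tens_ext; try lins.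
  move=> m0 h /=; rewrite tassoc_pure !tmap_pure ?tmap_assocV_nat ?pent1 ?tmap_pure //; try lins.
  by rewrite /Om tlift_pure.
rewrite HR -rho_coassoc.
move: (rho M X Z m); apply: tens_ext; try lins.
move=> m1 k /=; rewrite tassoc_pure tmap_pure ?tassocV_pr ?tmap_comp //; try lins.
rewrite tmap_pure //; try lins.
rewrite (tmap_ext (f' := fun u => tassocV (tmap id (psi Z Y) (tassoc (rho M Z Y m1 (x) u))))); last first.
  by move=> u; rewrite Frho_pure.
have -> : forall s, Om (tassoc (s (x) k)) = tlift (fun m0 c =>
    tassocV (m0 (x) tassoc (tmap (psi Z Y) id (tassocV (c (x) psi X Z (k (x) a)))))) s.
  apply: tens_ext; try lins.
  move=> m0 c /=; rewrite tassoc_pure /Om !tlift_pure ?tassoc_pure ?tmap_pure //; lins.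
move: (psi X Z (k (x) a)) (rho M Z Y m1) => q s.
move: q; apply: tens_ext; try lins.
move=> b k' /=; rewrite tmap_pure; try lins.
move: s; apply: tens_ext; try lins.
move=> m0 c /=; rewrite tassoc_pure tmap_pure ?tassoc_pure ?tlift_pure ?tassocV_pure ?tmap_pure //; try lins.
by rewrite assoc_pent.
Qed.


Lemma UF_ax (M : comodT) : is_comod K Ob C delta eps (FMM M) (Frh M).
Proof.
split; [exact: Frho_lin | exact: Frho_coassoc | exact: Frho_counit].
Qed.

Definition UF (M : comodT) : comodT := Comod K Ob C delta eps (FMM M) (Frh M) (UF_ax M).

Lemma Fac_bilin (M : comodT) X : bilin (Fac M X).
Proof.
rewrite /Fact /tmap; split=> [x|b] /=; first by lins.
by lins.
Qed.

Definition epsF (M : comodT) X (x : FMM (UF M) X) : FMM M X := tlift (Fac M X) x.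

Lemma epsF_lin (M : comodT) X : linear (epsF M X).
Proof. apply: tlift_lin; exact: Fac_bilin. Qed.

Lemma epsF_pure (M : comodT) X y b : epsF M X (y (x) b) = Fac M X y b.
Proof. by rewrite /epsF tlift_pure //; exact: Fac_bilin. Qed.

Ltac lin_extra ::= first [exact: mul_linl | exact: mul_linr | exact: Frho_lin | exact: epsF_lin | exact: mulA_lin].

Lemma is_Fhom_intro (M N : comodT) (g : forall X, FMM M X -> FMM N X) :
  (forall X, linear (g X)) ->
  (forall X x a, g X (Fac M X x a) = Fac N X (g X x) a) ->
  (forall X Y x, Frh N X Y (g X x) = tmap (g Y) id (Frh M X Y x)) ->
  is_Fhom K Ob C delta eps A psi M N g.
Proof. by move=> h1 h2 h3; split. Qed.

Lemma epsF_hom (M : comodT) : is_Fhom K Ob C delta eps A psi (UF M) M (epsF M).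
Proof.
apply: is_Fhom_intro.
- exact: epsF_lin.
- move=> X x a; move: x; apply: tens_ext; try lins.
  + by rewrite /Fact; apply: lin_comp; [exact: epsF_lin | lins].
  + by rewrite /Fact; apply: lin_comp; [lins | exact: epsF_lin].
  move=> y b /=; rewrite /Fact tmap_pure ?epsF_pure /Fact ?tmap_comp //; try lins.
  by congr (tmap _ _ _); apply: funext => c /=; rewrite mulrA.
move=> X Y x; move: x; apply: tens_ext; try lins.
move=> y b /=; rewrite epsF_pure Frho_pure /=.
move: y; apply: tens_ext; try lins.
  by rewrite /Fact; apply: lin_comp; [exact: Frho_lin | lins].
move=> m a /=; rewrite /Fact tmap_pure ?Frho_pure //; try lins.
move: (rho M X Y m); apply: tens_ext; try lins.
move=> n h /=; rewrite !tassoc_pure !tmap_pure //; try lins.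
have -> : a * b = Defs.mulA K A (a (x) b) by rewrite mulA_pure.
rewrite -(tmap_pure (f := id) (g := Defs.mulA K A) h (a (x) b)); try lins.
rewrite pent2 tassocV_pure tmap_pure ?tassoc_pure //; try lins.
rewrite tassocV_pr tmap_comp; try lins.
move: (psi X Y (h (x) a)); apply: tens_ext; try lins.
move=> a2 h2 /=; rewrite tassocV_pure !tassoc_pure !tmap_pure //; try lins.
rewrite !tassocV_pr !tmap_comp; try lins.
move: (psi X Y (h2 (x) b)); apply: tens_ext; try lins.
move=> b' h3 /=; rewrite !tmap_pure ?epsF_pure ?mulA_pure /Fact ?tmap_pure //; lins.
Qed.


Lemma Frho_nat (M N : comodT) (phi : forall X, cMM M X -> cMM N X) :
  is_comod_hom K Ob C delta eps M N phi ->
  forall X Y x, Frh N X Y (Fmp M N phi X x) = tmap (Fmp M N phi Y) id (Frh M X Y x).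
Proof.
case=> pl pc.
have Fl : forall X, linear (Fmp M N phi X) by move=> X; rewrite /Fmap; lins.
move=> X Y; apply: tens_ext; try lins.
move=> m a /=; rewrite /Fmap tmap_pure ?Frho_pure ?pc //; try lins.
move: (rho M X Y m); apply: tens_ext; try lins.
move=> n h /=; rewrite tmap_pure ?tassoc_pure ?tmap_pure //; try lins.
rewrite !tassocV_pr !tmap_comp; try lins.
by apply: tmap_ext => b /=; rewrite tmap_pure //; lins.
Qed.

Lemma Fmap_hom (M N : comodT) (phi : forall X, cMM M X -> cMM N X) :
  is_comod_hom K Ob C delta eps M N phi ->
  is_Fhom K Ob C delta eps A psi M N (Fmp M N phi).
Proof.
move=> hp; have pl := comod_hom_lin _ _ _ hp.
apply: is_Fhom_intro.
- by move=> X; rewrite /Fmap; lins.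
- move=> X x a; rewrite /Fmap /Fact !tmap_comp //; lins.
- exact: Frho_nat.
Qed.

Lemma Fmap_comod_hom (M N : comodT) (phi : forall X, cMM M X -> cMM N X) :
  is_comod_hom K Ob C delta eps M N phi ->
  is_comod_hom K Ob C delta eps (UF M) (UF N) (Fmp M N phi).
Proof.
move=> hp; have pl := comod_hom_lin _ _ _ hp; split.
  by move=> X; rewrite /Fmap; lins.
exact: Frho_nat.
Qed.

Lemma Fhom_comp (M N Q : comodT) (g : forall X, FMM M X -> FMM N X)
    (h : forall X, FMM N X -> FMM Q X) :
  is_Fhom K Ob C delta eps A psi M N g -> is_Fhom K Ob C delta eps A psi N Q h ->
  is_Fhom K Ob C delta eps A psi M Q (fun X x => h X (g X x)).
Proof.
case=> gl ga gc [hl ha hc]; apply: is_Fhom_intro.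
- move=> X; exact: lin_comp.
- by move=> X x a; rewrite ga ha.
- by move=> X Y x; rewrite hc gc tmap_comp.
Qed.

Lemma id_comod_hom (M : comodT) : is_comod_hom K Ob C delta eps M M (fun X m => m).
Proof. by split=> // X Y m; rewrite tmap_id. Qed.

Definition etaF (M : comodT) X (m : cMM M X) : FMM M X := m (x) 1.

Lemma etaF_hom (M : comodT) : is_comod_hom K Ob C delta eps M (UF M) (etaF M).
Proof.
split; first by move=> X; rewrite /etaF; lins.
by move=> X Y m; rewrite /etaF /= Frho_one.
Qed.


Lemma CX_ax X0 : is_comod K Ob C delta eps (fun Y => C Y X0) (fun Y Z => delta Y Z X0).
Proof.
split.
- move=> X Y; exact: dlin.
- move=> X Z Y m; exact: dcoassoc.
- move=> X m; exact: dcounitr.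
Qed.

Definition CX X0 : comodT := Comod K Ob C delta eps (fun Y => C Y X0) (fun Y Z => delta Y Z X0) (CX_ax X0).

Definition NVM (M : comodT) X0 Z : lmodType K := tens (cMM M X0) (C Z X0).
Definition NVrho (M : comodT) X0 Z W (x : NVM M X0 Z) : tens (NVM M X0 W) (C Z W) :=
  tassocV (tmap id (delta Z W X0) x).

Lemma NVrho_pure (M : comodT) X0 Z W v c : NVrho M X0 Z W (v (x) c) = tassocV (v (x) delta Z W X0 c).
Proof. by rewrite /NVrho tmap_pure //; lins. Qed.

Lemma NV_ax (M : comodT) X0 : is_comod K Ob C delta eps (NVM M X0) (NVrho M X0).
Proof.
have NVl : forall Z W, linear (NVrho M X0 Z W) by move=> Z W; rewrite /NVrho; lins.
split.
- exact: NVl.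
- move=> Z W Y; apply: tens_ext; try lins.
  move=> v c /=; rewrite !NVrho_pure tmap_assocV_nat //; last exact: dlin.
  have -> : forall d : tens (C W X0) (C Z W), tassoc (tmap (NVrho M X0 W Y) id (tassocV (v (x) d)))
          = tassocV (v (x) tassoc (tmap (delta W Y X0) id d)).
    apply: tens_ext; try lins.
    move=> d1 d2 /=; rewrite tassocV_pure !tmap_pure ?NVrho_pure ?assoc_pent //; lins.
  by rewrite dcoassoc.
- move=> Z; apply: tens_ext; try lins.
  by move=> v c /=; rewrite NVrho_pure tlift_epsV dcounitr.
Qed.

Definition NV (M : comodT) X0 : comodT := Comod K Ob C delta eps (NVM M X0) (NVrho M X0) (NV_ax M X0).

Lemma jM_hom (M : comodT) X0 :
  is_comod_hom K Ob C delta eps M (NV M X0) (fun Z => rho M Z X0).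
Proof.
split; first by move=> Z; lins.
by move=> Z W m /=; rewrite /NVrho -rho_coassoc tassocK.
Qed.

Lemma iv_hom (M : comodT) X0 (v : cMM M X0) :
  is_comod_hom K Ob C delta eps (CX X0) (NV M X0) (fun Z (c : C Z X0) => v (x) c : NVM M X0 Z).
Proof.
split; first by move=> Z; exact: tpure_linr.
by move=> Z W c /=; rewrite NVrho_pure tassocV_pr.
Qed.


Arguments Fmap_hom {M N phi}.
Arguments Fhom_comp {M N Q g h}.
Arguments Fmap_comod_hom {M N phi}.

Lemma nec_sigma : Fpsi_separable K Ob C delta eps A psi ->
   exists sigma : forall X : Ob, tens (C X X) A -> K,
     inV1 K Ob C delta A psi sigma /\
     (forall (X : Ob) (f : C X X), sigma X (f (x) 1) = eps X f).
Proof.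
case=> P [P1 P2 P3].
have P_ext : forall M N g1 g2 (h1 : is_Fhom K Ob C delta eps A psi M N g1)
    (h2 : is_Fhom K Ob C delta eps A psi M N g2),
    (forall X x, g1 X x = g2 X x) -> forall X m, P M N g1 h1 X m = P M N g2 h2 X m.
  move=> M N g1 g2 h1 h2 e.
  have e' : g1 = g2.
    by apply: functional_extensionality_dep => X; apply: funext => x; exact: e.
  by subst g2; rewrite (Prop_irrelevance h1 h2).
pose nuP (M : comodT) := P (UF M) M (epsF M) (epsF_hom M).
have nuP_hom : forall M, is_comod_hom K Ob C delta eps (UF M) M (nuP M).
  by move=> M; exact: P1.
have nuP_lin : forall M X, linear (nuP M X).
  by move=> M; case: (nuP_hom M).
have nuP_one : forall M X m, nuP M X (m (x) 1) = m.
  move=> M X m.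
  have hc := Fhom_comp (Fhom_comp (Fmap_hom (etaF_hom M)) (epsF_hom M)) (Fmap_hom (id_comod_hom M)).
  have := P3 M (UF M) M M (etaF M) (fun X m => m) (epsF M) (epsF_hom M) (etaF_hom M)
    (id_comod_hom M) hc X m.
  rewrite /= => e.
  change (P (UF M) M (epsF M) (epsF_hom M) X (etaF M X m) = m); rewrite -e.
  rewrite -[RHS](P2 M M (fun X m => m) (id_comod_hom M) (Fmap_hom (id_comod_hom M)) X m).
  apply: P_ext => Y x; congr (Fmp M M _ Y _).
  move: x; apply: tens_ext; try lins.
    by rewrite /Fmap; lins.
  move=> n a /=; rewrite /Fmap tmap_pure ?epsF_pure /etaF /Fact ?tmap_pure //; try lins.
  by rewrite mul1r.
have nuP_nat : forall M N (b : forall X, cMM M X -> cMM N X),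
    is_comod_hom K Ob C delta eps M N b ->
    forall X x, nuP N X (Fmp M N b X x) = b X (nuP M X x).
  move=> M N b hb X x.
  have hc1 := Fhom_comp (Fhom_comp (Fmap_hom (id_comod_hom (UF M))) (epsF_hom M)) (Fmap_hom hb).
  have h1 := P3 (UF M) (UF M) M N (fun X x => x) b (epsF M) (epsF_hom M)
    (id_comod_hom (UF M)) hb hc1 X x.
  have hc2 := Fhom_comp (Fhom_comp (Fmap_hom (Fmap_comod_hom hb)) (epsF_hom N)) (Fmap_hom (id_comod_hom N)).
  have h2 := P3 (UF M) (UF N) N N (Fmp M N b) (fun X x => x) (epsF N) (epsF_hom N)
    (Fmap_comod_hom hb) (id_comod_hom N) hc2 X x.
  rewrite /= in h1 h2.
  rewrite -[LHS]h2 -[RHS]h1; apply: P_ext => Y y.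
  have bl := comod_hom_lin _ _ _ hb.
  move: y; apply: tens_ext; try (rewrite /Fmap; lins).
  move=> z c /=; rewrite /Fmap !tmap_pure ?epsF_pure /Fact ?tmap_id ?tmap_comp //; lins.
pose sigma X (t : tens (C X X) A) := eps X (nuP (CX X) X t).
have formula : forall M X m a,
    nuP M X (m (x) a) = tlift (fun n g => sigma X (g (x) a) *: n) (rho M X X m).
  move=> M X m a.
  have h := nuP_nat M (NV M X) (fun Z => rho M Z X) (jM_hom M X) X (m (x) a).
  rewrite /Fmap tmap_pure /= in h; try lins.
  have cl : forall t : tens (cMM M X) (C X X),
      nuP (NV M X) X (t (x) a) = tmap id (fun c => nuP (CX X) X (c (x) a)) t.
    apply: tens_ext; try lins.
    move=> v c /=.
    have e := nuP_nat (CX X) (NV M X) _ (iv_hom M X v) X (c (x) a).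
    rewrite /Fmap tmap_pure /= in e; try lins.
    change (nuP (NV M X) X ((v (x) c : NVM M X X) (x) a) = tmap id (fun c => nuP (CX X) X (c (x) a)) (v (x) c)).
    rewrite e tmap_pure //; lins.
  rewrite cl in h.
  by rewrite -[LHS](rho_counit M X) -h tlift_tmap //; lins.
exists sigma; split; last first.
  by move=> X f; rewrite /sigma nuP_one.
split.
  by move=> X; rewrite /sigma; apply: (scal_comp (f := eps X) (g := nuP (CX X) X)); [exact: elin | exact: nuP_lin].
move=> X Y f a.
have F := formula (CX Y) X f a; rewrite /= in F; rewrite -F.
have [_ hc] := nuP_hom (CX Y).
have := hc X Y (f (x) a); rewrite /= => hcol.
rewrite -[RHS](dcounitl X Y) hcol Frho_pure /= tlift_tmap //; try lins.
Qed.

End Main.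

Theorem theorem4p5 (K : fieldType) (Ob : Type) (C : Ob -> Ob -> lmodType K)
    (delta : forall X Y Z : Ob, C X Z -> tens (C Y Z) (C X Y))
    (eps : forall X : Ob, C X X -> K)
    (A : algType K)
    (psi : forall X Y : Ob, tens (C X Y) A -> tens A (C X Y)) :
  coalg_so K Ob C delta eps ->
  entwining K Ob C delta eps A psi ->
  (Fpsi_separable K Ob C delta eps A psi <->
   exists sigma : forall X : Ob, tens (C X X) A -> K,
     inV1 K Ob C delta A psi sigma /\
     (forall (X : Ob) (f : C X X), sigma X (f (x) 1) = eps X f)).
Proof.
move=> [dl el dca dcl dcr] [pl p1 p2 p3 p4]; split.
  by apply: nec_sigma.
case=> sigma [[sl sV] so].
by apply: suff_sep.
Qed.
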